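(* Let $N\ge1$, fix a time $t_k$, and let $\mu_i(t_k)\in\mathbb{R}$, $\sigma_i(t_k)>0$ for $i\in\{1,\dots,N\}$, $\sigma_{\min}^2(t_k)=\min_i\sigma_i^2(t_k)$ and $\gamma(t_k)\in[0,1)$. Let $C(t_k),A_1(t_k),\dots,A_N(t_k)$ be independent with $C(t_k)\sim\mathcal{N}(0,\sigma_{\min}^2(t_k)|\gamma(t_k)|)$ and $A_i(t_k)\sim\mathcal{N}(\mu_i(t_k),\sigma_i^2(t_k)-\sigma_{\min}^2(t_k)|\gamma(t_k)|)$, set $\widetilde q_i(t_k)=C(t_k)+A_i(t_k)$ and $\widetilde M(t_k)=\max(0,\widetilde q_1(t_k),\dots,\widetilde q_N(t_k))$. Then for every $i\in\{1,\dots,N\}$, $$\mathbb{P}\bigl[\widetilde M(t_k)=\widetilde q_i(t_k)\bigr]=\int_{\mathbb{R}} f_{A_i(t_k)}(x)\,F_{C(t_k)}(x)\prod_{j=1,\,j\neq i}^N F_{A_j(t_k)}(x)\,dx,$$ where $f_{A_i(t_k)}$ is the density of $A_i(t_k)$ and $F_{C(t_k)}$, $F_{A_j(t_k)}$ are the cumulative distribution functions of $C(t_k)$ and $A_j(t_k)$.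
   Context: $(\widetilde q_1(t_k),\dots,\widetilde q_N(t_k))$ is the common factor approximation and $\widetilde M(t_k)$ the common factor maximum; if $\gamma(t_k)=0$ then $C(t_k)$ is the constant $0$ and $F_{C(t_k)}(x)=\mathbf{1}_{\{x\ge0\}}$. *)

(* Defs.v *)
From HB Require Import structures.
From mathcomp Require Import all_boot all_order all_algebra.
From mathcomp Require Import all_classical all_reals all_analysis.
Set Implicit Arguments. Unset Strict Implicit. Unset Printing Implicit Defensive.
Import Order.TTheory GRing.Theory Num.Theory.
Import numFieldNormedType.Exports.
Local Open Scope classical_set_scope.
Local Open Scope ring_scope.

Definition mutually_independent d (T : measurableType d) (R : realType)
    (P : probability T R) (I : finType) (X : I -> {RV P >-> R}) : Prop :=
  forall (J : {set I}) (B : I -> set R), (forall j, measurable (B j)) ->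
    P (\bigcap_(j in [set` J]) (X j @^-1` B j)) =
    (\prod_(j in J) P (X j @^-1` B j))%E.

Definition CA_family d (T : measurableType d) (R : realType) (P : probability T R)
    (N : nat) (C : {RV P >-> R}) (A : 'I_N -> {RV P >-> R}) :
    option 'I_N -> {RV P >-> R} :=
  fun o => match o with None => C | Some i => A i end.

(* Gaussian law N(m, v) with variance v >= 0; for v = 0 it is the Dirac mass
   at m (degenerate normal, i.e. the constant m). *)
Definition gauss_law (R : realType) (m v : R) (B : set R) : \bar R :=
  if v == 0 then \d_m B else normal_prob m (Num.sqrt v) B.

Definition sigma_min2 (R : realType) (N : nat) (hN : (0 < N)%N) (sigma : 'I_N -> R) : R :=
  \big[Num.min/(sigma (Ordinal hN)) ^+ 2]_(i < N) (sigma i) ^+ 2.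

(* Main.v *)
Require Import Defs.
From HB Require Import structures.
From mathcomp Require Import all_boot all_order all_algebra.
From mathcomp Require Import all_classical all_reals all_analysis.
From mathcomp Require Import ring lra zify.
From mathcomp Require Import measurable_realfun.
Import Order.TTheory GRing.Theory Num.Theory.
Import numFieldNormedType.Exports.
Local Open Scope classical_set_scope.
Local Open Scope ring_scope.
Set Implicit Arguments. Unset Strict Implicit. Unset Printing Implicit Defensive.
Section Partition.
Context (R : realType).
Local Open Scope ring_scope.

Definition zz (k : nat) : int :=
  if odd k then - (k./2).+1%:Z else (k./2)%:Z.

Lemma zz_inj : injective zz.
Proof.
move=> k l; rewrite /zz.
have Hk := odd_double_half k; have Hl := odd_double_half l.
case: (odd k) Hk; case: (odd l) Hl => /= Hl Hk.
- move/eqP; rewrite eqr_opp => /eqP [] e.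
  by rewrite -Hk -Hl e.
- move=> e; have : (- (k./2).+1%:Z < 0)%R by rewrite oppr_lt0.
  by rewrite e ltNge.
- move=> e; have : (- (l./2).+1%:Z < 0)%R by rewrite oppr_lt0.
  by rewrite -e ltNge.
- by move=> [] e; rewrite -Hk -Hl e.
Qed.

Lemma zz_surj (m : int) : exists k, zz k = m.
Proof.
case: m => n.
  exists (n.*2); by rewrite /zz odd_double doubleK.
exists (n.*2).+1; rewrite /zz /= odd_double /= uphalf_double.
by rewrite NegzE.
Qed.

Definition aa (h : R) (k : nat) : R := (zz k)%:~R * h.

Definition II (h : R) (k : nat) : set R := [set x | Num.floor (x / h) = zz k].

Lemma IIE (h : R) k : 0 < h -> II h k = `[aa h k, aa h k + h[%classic.
Proof.
move=> h0; apply/seteqP; split => x /=; rewrite in_itv /=.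
  move/eqP; rewrite floor_eq => /andP[h1 h2].
  rewrite /aa; apply/andP; split.
    by rewrite -ler_pdivlMr.
  by move: h2; rewrite ltr_pdivrMr // intrD mulrDl mul1r.
move=> /andP[h1 h2]; apply/eqP; rewrite floor_eq; apply/andP; split.
  by rewrite ler_pdivlMr.
rewrite ltr_pdivrMr // intrD mulrDl mul1r; exact h2.
Qed.

Lemma II_triv (h : R) : trivIset setT (II h).
Proof.
move=> k l _ _ [x [/= e1 e2]]; apply: zz_inj; by rewrite -e1 -e2.
Qed.

Lemma II_cover (h : R) : \bigcup_k II h k = setT.
Proof.
apply/seteqP; split => // x _.
have [k hk] := zz_surj (Num.floor (x / h)).
by exists k => //; rewrite /II /= hk.
Qed.

Lemma aa_even (h : R) M : aa h (M.*2) = M%:R * h.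
Proof. by rewrite /aa /zz odd_double doubleK. Qed.

Lemma aa_odd (h : R) M : aa h (M.*2).+1 = - (M.+1%:R * h).
Proof.
rewrite /aa /zz /= odd_double /= uphalf_double mulNr; congr (- (_ * _)).
Qed.

Lemma telescope_aa (h : R) (g : R -> R) M :
  \sum_(0 <= k < M.*2) (g (aa h k + h) - g (aa h k)) = g (M%:R * h) - g (- (M%:R * h)).
Proof.
elim: M => [|M IH]; first by rewrite big_geq // mul0r oppr0 subrr.
rewrite doubleS big_nat_recr //= big_nat_recr //= IH aa_even aa_odd.
have -> : M%:R * h + h = M.+1%:R * h by rewrite mulrSr mulrDl mul1r.
have -> : - (M.+1%:R * h) + h = - (M%:R * h) by rewrite mulrSr mulrDl mul1r; ring.
ring.
Qed.

End Partition.
Section Series.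
Context (R : realType).
Local Open Scope ereal_scope.

Lemma series_tel_le1 (h : R) (g : R -> R) : (0 < h)%R ->
  {homo g : x y / (x <= y)%R} -> (forall x, 0 <= g x <= 1)%R ->
  \sum_(0 <= k <oo) ((g (aa h k + h) - g (aa h k))%R%:E) <= 1.
Proof.
move=> h0 gnd g01.
have d0 k : (0 <= g (aa h k + h) - g (aa h k))%R.
  by rewrite subr_ge0 gnd // lerDl ltW.
apply: lime_le; first by apply: is_cvg_nneseries => n _ _; rewrite lee_fin.
apply: nearW => m; rewrite sumEFin lee_fin.
rewrite (@le_trans _ _ (\sum_(0 <= k < m.*2) (g (aa h k + h) - g (aa h k))))%R //.
  rewrite [X in (_ <= X)%R](big_cat_nat _ (n:=m)) //=; last by lia.
  by rewrite lerDl sumr_ge0.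
rewrite telescope_aa.
have := g01 (m%:R * h)%R; have := g01 (- (m%:R * h))%R.
move=> /andP[a1 a2] /andP[b1 b2]; lra.
Qed.

Lemma sandwich_series (X Y L U v : nat -> \bar R) :
  (forall k, 0 <= L k) -> (forall k, 0 <= v k) ->
  (forall k, L k <= X k <= U k) -> (forall k, L k <= Y k <= U k) ->
  (forall k, U k <= L k + v k) ->
  \sum_(0 <= k <oo) X k <= \sum_(0 <= k <oo) Y k + \sum_(0 <= k <oo) v k.
Proof.
move=> L0 v0 HX HY HU.
have X0 k : 0 <= X k by have /andP[+ _] := HX k; exact: le_trans.
rewrite (@le_trans _ _ (\sum_(0 <= k <oo) (L k + v k))) //.
  apply: lee_nneseries => // k _.
  by have /andP[_ +] := HX k => /le_trans; apply.
rewrite nneseriesD //; apply: leeD2r.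
apply: lee_nneseries => // k _.
by have /andP[+ _] := HY k.
Qed.

End Series.
Section Symmetry.
Context (R : realType).
Local Open Scope ring_scope.

Lemma normal_pdf0_even (s x : R) : s != 0 -> normal_pdf 0 s (- x) = normal_pdf 0 s x.
Proof.
move=> s0; rewrite /normal_pdf (negbTE s0).
by rewrite /normal_fun !subr0 sqrrN.
Qed.

Lemma sym_C d (T : measurableType d) (P : probability T R) (C : {RV P >-> R})
  (v : R) : (0 <= v)%R ->
  (forall B, measurable B -> distribution P C B = gauss_law 0 v B) ->
  forall t : R, P (C @^-1` `[- t, +oo[) = cdf C t.
Proof.
move=> v0 HC t.
rewrite /cdf -[LHS]/(distribution P C _) !HC //.
rewrite /gauss_law; case: eqP => [_|/eqP vn0].
  rewrite !diracE; congr ((_ : bool)%:R%:E); apply/idP/idP => /set_mem /=; rewrite !in_itv /= => H; apply/mem_set; rewrite /= in_itv /=; lra.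
rewrite /normal_prob.
rewrite -[in RHS](opprK t) ge0_integration_by_substitutionNy.
- have s0 : Num.sqrt v != 0.
    by rewrite sqrtr_eq0 -ltNge lt_neqAle eq_sym vn0.
  by apply: eq_integral => x _; rewrite /= normal_pdf0_even.
- apply: continuous_subspaceT; apply: continuous_normal_pdf.
  by rewrite sqrtr_eq0 -ltNge lt_neqAle eq_sym vn0.
- by move=> x _; exact: normal_pdf_ge0.
Qed.

End Symmetry.
Section Indep.
Context (R : realType) (d : measure_display) (T : measurableType d)
  (P : probability T R) (N : nat) (C : {RV P >-> R}) (A : 'I_N -> {RV P >-> R}).
Local Open Scope ring_scope.

Lemma rv_preimage_meas (X : {RV P >-> R}) (B : set R) :
  measurable B -> measurable (X @^-1` B).
Proof. by move=> mB; rewrite -[X @^-1` B]setTI; exact: measurable_funP. Qed.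

Definition Ev (i : 'I_N) (B : set R) (t : R) : set T :=
  [set w | B (A i w) /\ - t <= C w /\ (forall j, j != i -> A j w <= t)].

Definition Bf (i : 'I_N) (B : set R) (t : R) (o : option 'I_N) : set R :=
  match o with
  | None => `[- t, +oo[%classic
  | Some j => if j == i then B else `]-oo, t]%classic
  end.

Lemma EvE i B t : Ev i B t =
  \bigcap_(j in [set` [set: option 'I_N]%SET]) (CA_family C A j @^-1` Bf i B t j).
Proof.
apply/seteqP; split => w.
  move=> [hB [hC hA]] o _; case: o => [j|] /=.
    case: eqP => [->|/eqP ne] //=.
    by rewrite in_itv /=; exact: hA.
  by rewrite in_itv /= andbT.
move=> H; split; first by have := H (Some i) (finset.in_setT _); rewrite /= eqxx.
split; first by have := H None (finset.in_setT _); rewrite /= in_itv /= andbT.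
move=> j ne; have := H (Some j) (finset.in_setT _); rewrite /= (negbTE ne) /= in_itv /=.
done.
Qed.

Lemma Bf_meas i B t o : measurable B -> measurable (Bf i B t o).
Proof. by move=> mB; case: o => [j|] /=; [case: eqP|]. Qed.

Lemma Ev_meas i B t : measurable B -> measurable (Ev i B t).
Proof.
move=> mB; rewrite EvE; apply: fin_bigcap_measurable; first exact: finite_finpred.
move=> o _; apply: rv_preimage_meas; exact: Bf_meas.
Qed.

Lemma Ev_prob i B t : measurable B ->
  mutually_independent (CA_family C A) ->
  P (Ev i B t) = (P (A i @^-1` B) * P (C @^-1` `[(- t)%R, +oo[) *
     \prod_(j < N | j != i) cdf (A j) t)%E.
Proof.
move=> mB Hind; rewrite EvE Hind; last by move=> o; exact: Bf_meas.
rewrite (eq_bigl predT); last by move=> o; rewrite finset.in_setT.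
rewrite (bigD1 None) //=.
rewrite (reindex_omap Some id); last by case.
rewrite /= (eq_bigl predT); last by move=> j; rewrite eqxx.
rewrite (bigD1 i) //= eqxx.
rewrite muleA [X in (X * _)%E]muleC; congr (_ * _)%E.
  by apply: eq_bigr => j ne; rewrite (negbTE ne).

Qed.

End Indep.
Section Eset.
Context (R : realType) (d : measure_display) (T : measurableType d)
  (P : probability T R) (N : nat) (C : {RV P >-> R}) (A : 'I_N -> {RV P >-> R}).
Local Open Scope ring_scope.

Lemma E_eq i :
  [set w | \big[Num.max/0]_(j < N) (C w + A j w) = C w + A i w] =
  [set w | - C w <= A i w /\ forall j, A j w <= A i w].
Proof.
apply/seteqP; split => w /=.
  move=> e; split.
    have : 0 <= \big[Num.max/0]_(j < N) (C w + A j w) by apply/bigmax_geP; left.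
    rewrite e; lra.
  move=> j; have := le_bigmax 0 (fun j => C w + A j w) j; rewrite /= e; lra.
move=> [h1 h2]; apply/eqP; rewrite eq_le; apply/andP; split.
  apply/bigmax_leP; split; first lra.
  by move=> j _; have := h2 j; lra.
exact: (le_bigmax 0 (fun j => C w + A j w) i).
Qed.

Lemma ge0_meas (f : T -> R) : measurable_fun setT f -> measurable [set w | 0 <= f w].
Proof.
move=> mf; have -> : [set w | 0 <= f w] = setT `&` f @^-1` `[0, +oo[.
  by rewrite setTI; apply/seteqP; split => w /=; rewrite in_itv /= andbT.
exact: mf.
Qed.

Lemma E_meas i : measurable [set w | - C w <= A i w /\ forall j, A j w <= A i w].
Proof.
have -> : [set w | - C w <= A i w /\ forall j, A j w <= A i w] =
  [set w | 0 <= A i w + C w] `&`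
  \bigcap_(j in [set` [set: 'I_N]%SET]) [set w | 0 <= A i w - A j w].
  apply/seteqP; split => w /=.
    move=> [h1 h2]; split; first lra.
    by move=> j _ /=; have := h2 j; lra.
  move=> [h1 h2]; split; first lra.
  by move=> j; have := h2 j (finset.in_setT _); rewrite /=; lra.
apply: measurableI.
  by apply: ge0_meas; apply: measurable_realfun.measurable_funD.
apply: fin_bigcap_measurable; first exact: finite_finpred.
by move=> j _; apply: ge0_meas; apply: measurable_realfun.measurable_funB.
Qed.

End Eset.
Theorem lemma6 (R : realType) (d : measure_display) (T : measurableType d)
    (P : probability T R) (N : nat) (hN : (0 < N)%N)
    (mu sigma : 'I_N -> R) (gamma : R)
    (C : {RV P >-> R}) (A : 'I_N -> {RV P >-> R}) :
  (forall i, 0 < sigma i) ->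
  0 <= gamma < 1 ->
  mutually_independent (CA_family C A) ->
  (forall B, measurable B ->
     distribution P C B = gauss_law 0 (sigma_min2 hN sigma * `|gamma|) B) ->
  (forall i B, measurable B ->
     distribution P (A i) B =
       gauss_law (mu i) (sigma i ^+ 2 - sigma_min2 hN sigma * `|gamma|) B) ->
  forall i : 'I_N,
    P [set w | \big[Num.max/0]_(j < N) (C w + A j w) = C w + A i w] =
    (\int[lebesgue_measure]_x
       ((normal_pdf (mu i) (Num.sqrt (sigma i ^+ 2 - sigma_min2 hN sigma * `|gamma|)) x)%:E
        * cdf C x
        * \prod_(j < N | j != i) cdf (A j) x))%E.
Proof.
move=> sig0 gam Hind HC HA i.
set smin := sigma_min2 hN sigma.
have smin0 : 0 <= smin.
  by rewrite /smin /sigma_min2; apply: le_bigmin => [|j _]; exact: sqr_ge0.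
have smin_le : smin <= sigma i ^+ 2.
  by rewrite /smin /sigma_min2; exact: bigmin_le.
move: gam => /andP[g0 g1].
have ag : `|gamma| = gamma by rewrite ger0_norm.
set v := sigma i ^+ 2 - smin * `|gamma|.
have v0 : 0 < v.
  rewrite /v ag; have si := sig0 i.
  have s2 : 0 < sigma i ^+ 2 by rewrite exprn_gt0.
  nra.
have vn0 : v != 0 by rewrite gt_eqF.
set s := Num.sqrt v.
have s0 : s != 0 by rewrite /s sqrtr_eq0 -ltNge v0.
have vC0 : 0 <= smin * `|gamma| by rewrite mulr_ge0.
set f := normal_pdf (mu i) s.
pose gr (x : R) := fine (cdf C x) * \prod_(j < N | j != i) fine (cdf (A j) x).
have cdf_fin (X : {RV P >-> R}) x : cdf X x \is a fin_num by rewrite fin_num_measure.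
have Gr x : (cdf C x * \prod_(j < N | j != i) cdf (A j) x = (gr x)%:E)%E.
  rewrite /gr EFinM -prodEFin fineK //; congr (_ * _)%E.
  by apply: eq_bigr => j _; rewrite fineK.
have fcdf01 (X : {RV P >-> R}) x : 0 <= fine (cdf X x) <= 1.
  rewrite fine_ge0 ?cdf_ge0 //=.
  by rewrite -lee_fin fineK //; exact: cdf_le1.
have fcdf_nd (X : {RV P >-> R}) : {homo (fun x => fine (cdf X x)) : x y / x <= y}.
  by move=> x y xy; apply: fine_le => //; exact: cdf_nondecreasing.
have prod01 x : 0 <= \prod_(j < N | j != i) fine (cdf (A j) x) <= 1.
  apply/andP; split.
    by apply: prodr_ge0 => j _; case/andP: (fcdf01 (A j) x).
  by apply: prodr_ile1 => j _; exact: fcdf01.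
have gr01 x : 0 <= gr x <= 1.
  case/andP: (fcdf01 C x) => a1 a2; case/andP: (prod01 x) => b1 b2.
  by rewrite /gr mulr_ge0 //= mulr_ile1.
have gr_nd : {homo gr : x y / x <= y}.
  move=> x y xy; rewrite /gr; apply: ler_pM.
  - by case/andP: (fcdf01 C x).
  - by case/andP: (prod01 x).
  - exact: fcdf_nd.
  - apply: ler_prod => j _; apply/andP; split.
      by case/andP: (fcdf01 (A j) x).
    exact: fcdf_nd.
have mgr : measurable_fun setT gr.
  exact: measurable_realfun.nondecreasing_measurable.
have mf : measurable_fun setT f by exact: measurable_normal_pdf.
have mfg (D : set R) : measurable_fun D (EFin \o (fun x => f x * gr x)).
  apply/measurable_EFinP; apply: measurable_funTS.
  exact: measurable_funM.
have -> : (\int[lebesgue_measure]_x ((f x)%:E * cdf C x *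
      \prod_(j < N | j != i) cdf (A j) x))%E =
    (\int[lebesgue_measure]_x (f x * gr x)%:E)%E.
  by apply: eq_integral => x _; rewrite -muleA Gr -EFinM.
rewrite E_eq.
set E := [set w | - C w <= A i w /\ (forall j, A j w <= A i w)].
have mE : measurable E by exact: E_meas.
set I := (\int[lebesgue_measure]_x (f x * gr x)%:E)%E.
have pAB B : measurable B -> P (A i @^-1` B) = (\int[lebesgue_measure]_(x in B) (f x)%:E)%E.
  move=> mB; rewrite -[LHS]/(distribution P (A i) B) HA //.
  by rewrite /gauss_law (negbTE vn0).
have hp : 0 < normal_peak s by exact: normal_peak_gt0.
have key h : 0 < h -> (P E <= I + (normal_peak s * h)%:E)%E /\
                      (I <= P E + (normal_peak s * h)%:E)%E.
  move=> h0.
  have mII k : measurable (II h k) by rewrite (IIE _ h0); exact: measurable_itv.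
  pose q k := fine (P (A i @^-1` II h k)).
  have pq k : P (A i @^-1` II h k) = (q k)%:E.
    by rewrite fineK //; apply: fin_num_measure; exact: rv_preimage_meas.
  have q0 k : 0 <= q k by rewrite fine_ge0.
  have qle k : q k <= normal_peak s * h.
    rewrite -lee_fin -pq pAB //.
    apply: (@le_trans _ _ (\int[lebesgue_measure]_(x in II h k) (cst (normal_peak s)%:E x))%E).
      apply: ge0_le_integral => //.
      - exact: mII.
      - by move=> x _ /=; rewrite lee_fin normal_pdf_ge0.
      - by apply/measurable_EFinP; exact: measurable_funTS.
      - by move=> x _ /=; rewrite lee_fin normal_pdf_ub.
    have lm : lebesgue_measure (`[aa h k, aa h k + h[%classic : set R) = h%:E.
      rewrite lebesgue_measure_itv /= lte_fin ltrDl h0 -EFinD; congr (_%:E); ring.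
    rewrite integral_cst; last exact: mII.
    rewrite [X in (_ * X <= _)%E](_ : _ = h%:E); first by rewrite -EFinM.
    by rewrite (IIE _ h0); exact: lm.
  pose X k := P (E `&` A i @^-1` II h k).
  pose Y k := (\int[lebesgue_measure]_(x in II h k) (f x * gr x)%:E)%E.
  pose L k := (q k * gr (aa h k))%:E.
  pose U k := (q k * gr (aa h k + h))%:E.
  pose vv k := (normal_peak s * h * (gr (aa h k + h) - gr (aa h k)))%:E.
  have PEv k t : P (Ev C A i (II h k) t) = (q k * gr t)%:E.
    by rewrite Ev_prob // (sym_C vC0 HC) EFinM -pq -Gr muleA.
  have inII k x : II h k x -> aa h k <= x < aa h k + h.
    by rewrite (IIE _ h0) /= in_itv.
  have hL k : (L k <= X k)%E.
    rewrite /L -PEv; apply: le_measure; rewrite ?inE.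
    - exact: Ev_meas.
    - by apply: measurableI => //; exact: rv_preimage_meas.
    move=> w [hB [hC hA]]; split => //.
    have /andP[a1 a2] := inII _ _ hB.
    split; first lra.
    move=> j; have [->|ne] := eqVneq j i; first exact: lexx.
    by have := hA j ne; lra.
  have hU k : (X k <= U k)%E.
    rewrite /U -PEv; apply: le_measure; rewrite ?inE.
    - by apply: measurableI => //; exact: rv_preimage_meas.
    - exact: Ev_meas.
    move=> w [[hC hA] hB]; split => //.
    have /andP[a1 a2] := inII _ _ hB.
    split; first lra.
    by move=> j ne; have := hA j; lra.
  have LY k : L k = (\int[lebesgue_measure]_(x in II h k) (f x * gr (aa h k))%:E)%E.
    rewrite /L EFinM -pq pAB // -ge0_integralZr //.
    - exact: mII.
    - by apply/measurable_EFinP; exact: measurable_funTS.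
    - by move=> x _ /=; rewrite lee_fin normal_pdf_ge0.
    - by rewrite lee_fin; case/andP: (gr01 (aa h k)).
  have UY k : U k = (\int[lebesgue_measure]_(x in II h k) (f x * gr (aa h k + h))%:E)%E.
    rewrite /U EFinM -pq pAB // -ge0_integralZr //.
    - exact: mII.
    - by apply/measurable_EFinP; exact: measurable_funTS.
    - by move=> x _ /=; rewrite lee_fin normal_pdf_ge0.
    - by rewrite lee_fin; case/andP: (gr01 (aa h k + h)).
  have hYL k : (L k <= Y k)%E.
    rewrite LY; apply: ge0_le_integral => //.
    - exact: mII.
    - move=> x _ /=; rewrite lee_fin mulr_ge0 ?normal_pdf_ge0 //.
      by case/andP: (gr01 (aa h k)).
    - by apply/measurable_EFinP; apply: measurable_funTS; apply: measurable_funM.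
    - exact: mfg.
    move=> x /inII /andP[a1 a2]; rewrite lee_fin ler_wpM2l ?normal_pdf_ge0 //.
    exact: gr_nd.
  have hYU k : (Y k <= U k)%E.
    rewrite UY; apply: ge0_le_integral => //.
    - exact: mII.
    - move=> x _ /=; rewrite lee_fin mulr_ge0 ?normal_pdf_ge0 //.
      by case/andP: (gr01 x).
    - exact: mfg.
    - by apply/measurable_EFinP; apply: measurable_funTS; apply: measurable_funM.
    move=> x /inII /andP[a1 a2]; rewrite lee_fin ler_wpM2l ?normal_pdf_ge0 //.
    by apply: gr_nd; rewrite ltW.
  have hL0 k : (0 <= L k)%E.
    by rewrite lee_fin mulr_ge0 //; case/andP: (gr01 (aa h k)).
  have dgr k : 0 <= gr (aa h k + h) - gr (aa h k).
    by rewrite subr_ge0; apply: gr_nd; rewrite lerDl ltW.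
  have hv0 k : (0 <= vv k)%E.
    by rewrite lee_fin mulr_ge0 // mulr_ge0 // ltW.
  have hUL k : (U k <= L k + vv k)%E.
    rewrite -EFinD lee_fin.
    have := qle k; have := q0 k; have := dgr k; nra.
  have sumX : P E = (\sum_(0 <= k <oo) X k)%E.
    have EU : \bigcup_k (E `&` A i @^-1` II h k) = E.
      by rewrite -setI_bigcupr -preimage_bigcup II_cover preimage_setT setIT.
    rewrite -[in LHS]EU measure_semi_bigcup //.
    - by move=> k; apply: measurableI => //; exact: rv_preimage_meas.
    - move=> k l _ _ [w [[_ h1] [_ h2]]].
      by apply: (II_triv (h:=h)) => //; exists (A i w).
    - by rewrite EU.
  have sumY : I = (\sum_(0 <= k <oo) Y k)%E.
    have -> : I = (\int[lebesgue_measure]_(x in \bigcup_k II h k) (f x * gr x)%:E)%E.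
      by rewrite II_cover.
    rewrite ge0_integral_bigcup //.
    - exact: mfg.
    - move=> x _ /=; rewrite lee_fin mulr_ge0 ?normal_pdf_ge0 //.
      by case/andP: (gr01 x).
    - exact: II_triv.
  have sumv : (\sum_(0 <= k <oo) vv k <= (normal_peak s * h)%:E)%E.
    rewrite /vv; under eq_eseriesr do rewrite EFinM.
    rewrite nneseriesZl //; last by move=> k _; rewrite lee_fin.
    rewrite -[X in (_ <= X)%E]mule1; apply: lee_wpmul2l.
      by rewrite lee_fin mulr_ge0 // ltW.
    exact: series_tel_le1.
  split.
    rewrite sumX sumY.
    apply: le_trans (@sandwich_series _ X Y L U vv hL0 hv0 _ _ hUL) _.
    - by move=> k; rewrite hL hU.
    - by move=> k; rewrite hYL hYU.
    by apply: leeD2l.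
  rewrite sumX sumY.
  apply: le_trans (@sandwich_series _ Y X L U vv hL0 hv0 _ _ hUL) _.
  - by move=> k; rewrite hYL hYU.
  - by move=> k; rewrite hL hU.
  by apply: leeD2l.
apply/eqP; rewrite eq_le; apply/andP; split; apply/lee_addgt0Pr => e e0.
  have := (key (e / normal_peak s) (divr_gt0 e0 hp)).1.
  by rewrite mulrC divfK // gt_eqF.
have := (key (e / normal_peak s) (divr_gt0 e0 hp)).2.
by rewrite mulrC divfK // gt_eqF.
Qed.
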